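(* Let $v_1,\dots,v_N\in S^{n-1}$ ($N\ge 2$) be in general position in dimension $n$. There exists a constant $c_0>0$ depending only on $n$ and $v_1,\dots,v_N$ such that the following holds: for any $1\le i_1<i_2\le N$, any $R>0$, and any two $(n-1)$-dimensional Euclidean balls $B_1^{n-1},B_2^{n-1}$ of radius $R$ with $B_1^{n-1}$ lying in a hyperplane orthogonal to $v_{i_1}$ and $B_2^{n-1}$ lying in a hyperplane orthogonal to $v_{i_2}$, the set $K=\mathrm{conv}\{B_1^{n-1},B_2^{n-1}\}$ contains a ball $B(x_0,c_0R)$ for some $x_0\in\mathrm{int}\,K$.
   Context: Unit vectors $v_1,\dots,v_N\in\mathbb R^n$ are in general position in dimension $n$ if any $n$ of them are linearly independent (in particular no two are parallel). $B(x,r)$ denotes the closed Euclidean ball in $\mathbb R^n$ with center $x$ and radius $r$. *)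

(* Defs.v *)
From HB Require Import structures.
From mathcomp Require Import all_boot all_order all_algebra.
From mathcomp Require Import reals.
Set Implicit Arguments. Unset Strict Implicit. Unset Printing Implicit Defensive.
Import Order.TTheory GRing.Theory Num.Theory.
Local Open Scope ring_scope.

Section Defs.
Variables (R : realType) (n : nat).
Notation vec := 'rV[R]_n.

Definition dot (u v : vec) : R := \sum_(i < n) u 0 i * v 0 i.

Definition unit_vec (v : vec) : Prop := dot v v = 1.

Definition cball (x : vec) (r : R) : vec -> Prop :=
  fun y => dot (y - x) (y - x) <= r ^+ 2.

Definition lin_indep k (w : 'I_k -> vec) : Prop :=
  forall a : 'I_k -> R, \sum_(i < k) a i *: w i = 0 -> forall i, a i = 0.

(* general position in dimension n: any n of them linearly independent,
   and (as stated in the context) no two of them parallel *)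
Definition general_position N (v : 'I_N -> vec) : Prop :=
  (forall f : 'I_n -> 'I_N, injective f -> lin_indep (fun i => v (f i))) /\
  (forall i j : 'I_N, i != j -> lin_indep (fun k : 'I_2 => if k == ord0 then v i else v j)).

Definition hball (u c : vec) (r : R) : vec -> Prop :=
  fun y => dot (y - c) u = 0 /\ cball c r y.

Definition conv (A : vec -> Prop) : vec -> Prop :=
  fun x => exists (k : nat) (w : 'I_k -> R) (p : 'I_k -> vec),
    (forall i, 0 <= w i) /\ \sum_(i < k) w i = 1 /\ (forall i, A (p i)) /\
    x = \sum_(i < k) w i *: p i.

Definition interior (A : vec -> Prop) : vec -> Prop :=
  fun x => exists r : R, 0 < r /\ forall y, cball x r y -> A y.

End Defs.

(* Main.v *)
Require Import Defs.
From HB Require Import structures.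
From mathcomp Require Import all_boot all_order all_algebra.
From mathcomp Require Import reals.
From mathcomp Require Import ring lra.
Import Order.TTheory GRing.Theory Num.Theory.
Local Open Scope ring_scope.

Section Aux.
Context {R : realType} {n : nat}.
Implicit Types (u v w x y z : 'rV[R]_n) (a : R).

Lemma dotC u v : dot u v = dot v u.
Proof. by apply: eq_bigr => i _; rewrite mulrC. Qed.

Lemma dotDl u v w : dot (u + v) w = dot u w + dot v w.
Proof. by rewrite /dot -big_split; apply: eq_bigr => i _; rewrite mxE mulrDl. Qed.

Lemma dotZl a u v : dot (a *: u) v = a * dot u v.
Proof. by rewrite /dot mulr_sumr; apply: eq_bigr => i _; rewrite mxE mulrA. Qed.

Lemma dotNl u v : dot (- u) v = - dot u v.
Proof. by rewrite -scaleN1r dotZl mulN1r. Qed.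

Lemma dotBl u v w : dot (u - v) w = dot u w - dot v w.
Proof. by rewrite dotDl dotNl. Qed.

Lemma dotDr u v w : dot w (u + v) = dot w u + dot w v.
Proof. by rewrite dotC dotDl !(dotC w). Qed.

Lemma dotZr a u v : dot v (a *: u) = a * dot v u.
Proof. by rewrite dotC dotZl dotC. Qed.

Lemma dotBr u v w : dot w (u - v) = dot w u - dot w v.
Proof. by rewrite dotC dotBl !(dotC w). Qed.

Lemma dot_ge0 u : 0 <= dot u u.
Proof. by apply: sumr_ge0 => i _; rewrite -expr2 sqr_ge0. Qed.

Lemma dot_eq0 u : dot u u = 0 -> u = 0.
Proof.
move=> H; apply/rowP => j; rewrite mxE.
have Hj : u 0 j * u 0 j = 0.
  by apply: (psumr_eq0P _ H) => // i _; rewrite -expr2 sqr_ge0.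
by move/eqP: Hj; rewrite mulf_eq0 orbb => /eqP.
Qed.

Lemma cs_unit z u : unit_vec u -> dot z u ^+ 2 <= dot z z.
Proof.
rewrite /unit_vec => Hu.
have := dot_ge0 (z - dot z u *: u).
rewrite dotBl !dotBr !dotZl !dotZr Hu (dotC u z).
move=> H; rewrite -subr_ge0; apply: le_trans H _; rewrite le_eqVlt; apply/orP; left.
apply/eqP; ring.
Qed.

Lemma par_ineq x y : dot (x - y) (x - y) <= 2 * dot x x + 2 * dot y y.
Proof.
have := dot_ge0 (x + y).
rewrite dotBl !dotBr !dotDl !dotDr (dotC y x) => H.
rewrite -subr_ge0; apply: le_trans H _; rewrite le_eqVlt; apply/orP; left.
apply/eqP; ring.
Qed.

Lemma pair_pos u w : unit_vec u -> unit_vec w ->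
  lin_indep (fun k : 'I_2 => if k == ord0 then u else w) ->
  0 < 1 - dot u w ^+ 2.
Proof.
rewrite /unit_vec => Hu Hw Hli.
set s := dot u w.
have E : dot (u - s *: w) (u - s *: w) = 1 - s ^+ 2.
  rewrite dotBl !dotBr !dotZl !dotZr Hu Hw (dotC w u) -/s; ring.
rewrite lt_neqAle -E dot_ge0 andbT; apply/negP => /eqP H.
have H0 := dot_eq0 _ (esym H).
have := Hli (fun k => if k == ord0 then 1 else - s).
rewrite !big_ord_recr big_ord0 /= add0r scale1r scaleNr.
move=> /(_ H0 ord0) /=; apply/eqP; exact: oner_neq0.
Qed.

End Aux.

Theorem lemma3p3 (R : realType) (n N : nat) (v : 'I_N -> 'rV[R]_n) :
  (2 <= N)%N ->
  (forall i, unit_vec (v i)) ->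
  general_position v ->
  exists c0 : R, 0 < c0 /\
    forall (i1 i2 : 'I_N) (r : R) (c1 c2 : 'rV[R]_n),
      (i1 < i2)%N -> 0 < r ->
      let K := conv (fun y => hball (v i1) c1 r y \/ hball (v i2) c2 r y) in
      exists x0 : 'rV[R]_n, interior K x0 /\
        (forall y, cball x0 (c0 * r) y -> K y).
Proof.
move=> _ Hunit [_ Hgp].
pose F i j := 1 - dot (v i) (v j) ^+ 2.
have Fpos : forall i j, i != j -> 0 < F i j.
  by move=> i j ij; apply: pair_pos; [apply: Hunit|apply: Hunit|apply: Hgp].
have Fle1 : forall i j, F i j <= 1.
  by move=> i j; rewrite /F lerBlDr lerDl sqr_ge0.
pose delta := \prod_(i < N) \prod_(j < N | i != j) F i j.
have dpos : 0 < delta.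
  by apply: prodr_gt0 => i _; apply: prodr_gt0 => j ij; apply: Fpos.
have dle : forall i j, i != j -> delta <= F i j.
  move=> i j ij; rewrite /delta (bigD1 i) //= (bigD1 j) //=.
  have h1 := Fpos i j ij.
  rewrite -mulrA ler_piMr ?(ltW h1) //.
  apply: mulr_ile1.
  - by apply: prodr_ge0 => k /andP[kij _]; apply: ltW; apply: Fpos.
  - by apply: prodr_ge0 => k _; apply: prodr_ge0 => l kl; apply: ltW; apply: Fpos.
  - by apply: prodr_ile1 => k /andP[kij _]; rewrite ltW ?Fle1 ?Fpos.
  - apply: prodr_ile1 => k _; apply/andP; split.
      by apply: prodr_ge0 => l kl; apply: ltW; apply: Fpos.
    by apply: prodr_ile1 => l kl; rewrite ltW ?Fle1 ?Fpos.
exists (delta / 4); split; first by apply: divr_gt0.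
move=> i1 i2 r c1 c2 lt12 rpos K.
have ne12 : i1 != i2 by apply/eqP => E; rewrite E ltnn in lt12.
set u := v i1; set w := v i2.
have Hu : dot u u = 1 := Hunit i1.
have Hw : dot w w = 1 := Hunit i2.
set s := dot u w.
set d := 1 - s ^+ 2.
have dd : delta <= d := dle i1 i2 ne12.
have d1 : delta <= 1 by apply: le_trans dd (Fle1 i1 i2).
have dpos' : 0 < d by apply: lt_le_trans dd.
pose x0 := 2^-1 *: (c1 + c2).
have claim : forall y, cball x0 (delta / 4 * r) y -> K y.
  move=> y; rewrite /cball; set z := y - x0 => Hz.
  rewrite (_ : (delta / 4 * r) ^+ 2 = delta ^+ 2 * r ^+ 2 / 16) in Hz;
    last by field.
  set dz := dot z u.
  pose b := (2 * dz / d) *: (u - s *: w).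
  pose a := 2 *: z - b.
  have Hbb : dot b b = 4 * dz ^+ 2 / d.
    rewrite /b dotZl !dotZr dotBl !dotBr !dotZl !dotZr Hu Hw (dotC w u) -/s.
    rewrite (_ : 1 - s * s - (s * s - s * (s * 1)) = d); last by rewrite /d; ring.
    by field; rewrite gt_eqF.
  have Hq : dz ^+ 2 <= dot z z := cs_unit z _ (Hunit i1).
  have Hbr : dot b b <= r ^+ 2 / 4.
    rewrite Hbb ler_pdivrMr // mulrAC ler_pdivlMr //.
    have h1 : 4 * dz ^+ 2 * 4 <= 16 * dot z z by lra.
    apply: le_trans h1 _.
    have h2 : 16 * dot z z <= delta ^+ 2 * r ^+ 2.
      lra.
    apply: le_trans h2 _.
    have h3 : delta ^+ 2 <= d by rewrite expr2; nra.
    by rewrite mulrC ler_wpM2l // sqr_ge0.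
  have Hzz : dot z z <= delta ^+ 2 * r ^+ 2 / 16.
    lra.
  have Haa : dot a a <= r ^+ 2.
    apply: le_trans (par_ineq _ _) _.
    rewrite dotZl dotZr.
    have h4 : delta ^+ 2 * r ^+ 2 <= r ^+ 2.
      rewrite ler_piMl ?sqr_ge0 // expr2; nra.
    lra.
  exists 2%N, (fun _ => 2^-1),
    (fun k : 'I_2 => if k == ord0 then c1 + a else c2 + b).
  split; first by move=> _; rewrite invr_ge0.
  split; first by rewrite !big_ord_recr big_ord0 /=; field.
  have Pa : c1 + a - c1 = a by rewrite addrC addKr.
  have Qb : c2 + b - c2 = b by rewrite addrC addKr.
  split.
    move=> k; case: ifP => _.
      left; rewrite /hball /cball Pa; split => //.
      rewrite -/u /a dotBl dotZl -/dz /b dotZl (dotBl u (s *: w) u) dotZl Hu (dotC w u) -/s -/dz.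
      rewrite (_ : 1 - s * s = d); last by rewrite /d expr2.
      by field; rewrite gt_eqF.
    right; rewrite /hball /cball Qb; split; last by apply: le_trans Hbr _; have := sqr_ge0 r; lra.
    by rewrite -/w /b dotZl dotBl dotZl Hw -/s; ring.
  rewrite !big_ord_recr big_ord0 /=.
  apply/rowP => j; rewrite !mxE; field; by rewrite gt_eqF.
exists x0; split; last exact: claim.
exists (delta / 4 * r); split; last exact: claim.
by rewrite mulr_gt0 // divr_gt0.
Qed.
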